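(* Let $d:a\mapsto a'$ be a Hardy type series derivation on $\mathbb{K}$. Let $a\in\mathbb{K}^*$ with $a\not\asymp 1$. Then $$\mathrm{LT}\!\left(\frac{a'}{a}\right)=\mathrm{LE}(a)\,\mathrm{LT}\!\left(\frac{\mathrm{LF}(a)'}{\mathrm{LF}(a)}\right);$$ more precisely $\mathrm{LM}(a'/a)=\theta^{(\mathrm{LF}(a))}$ and $\mathrm{LC}(a'/a)=\mathrm{LE}(a)\,\mathrm{LC}\big(\mathrm{LF}(a)'/\mathrm{LF}(a)\big)$. In particular, $\hat\theta$ equals the greatest lower bound (with respect to $\preccurlyeq$) of $\Psi=\{\mathrm{LM}(b'/b): b\in\mathbb{K}^*,\ b\not\asymp 1\}$.
   Context: Let $(\Phi,\preccurlyeq)$ be a totally ordered set; $\mathbf{H}(\Phi)$ is the group of formal products $\gamma=\prod_{\phi}\phi^{\gamma_\phi}$, $\gamma_\phi\in\mathbb{R}$, with anti-well-ordered support $\operatorname{supp}\gamma=\{\phi:\gamma_\phi\neq0\}$, pointwise multiplication and anti-lexicographic order ($\gamma\succ1$ iff the exponent of $\max\operatorname{supp}\gamma$ is positive); $\Phi\subseteq\mathbf H(\Phi)$ via $\phi=\phi^1$. Fix a subgroup $\Gamma\supseteq\Phi$ of $\mathbf H(\Phi)$. For $1\ne\gamma$: $\mathrm{LF}(\gamma)=\max\operatorname{supp}\gamma$, $\mathrm{LE}(\gamma)=\gamma_{\mathrm{LF}(\gamma)}$. $\mathbb{K}=\mathbb{R}((\Gamma))$: formal series $\sum a_\alpha\alpha$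 with anti-well-ordered support $\operatorname{Supp}a\subseteq\Gamma$. For $a\ne0$: $\mathrm{LM}(a)=\max\operatorname{Supp}a$, $\mathrm{LC}(a)$ its coefficient, $\mathrm{LT}(a)=\mathrm{LC}(a)\mathrm{LM}(a)$, $\mathrm{LF}(a)=\mathrm{LF}(\mathrm{LM}(a))$, $\mathrm{LE}(a)=\mathrm{LE}(\mathrm{LM}(a))$. $a\preccurlyeq b$ iff $\mathrm{LM}(a)\preccurlyeq\mathrm{LM}(b)$; $a\asymp b$ iff $\mathrm{LM}(a)=\mathrm{LM}(b)$; $|a|=\max(\mathrm{LM}(a),\mathrm{LM}(a)^{-1})$; $a,b\succ1$ are comparable iff $\mathrm{LF}(a)=\mathrm{LF}(b)$. Summable families: union of supports anti-well-ordered, each monomial in finitely many supports; sums coefficientwise. A series derivation is a map $a\mapsto a'$ on $\mathbb{K}$ with $1'=0$, $\alpha'=\alpha\sum_{\phi\in\operatorname{supp}\alpha}\alpha_\phi\phi'/\phi$ for $\alpha=\prod\phi^{\alpha_\phi}\in\Gamma$, and $a'=\sum a_\alpha\alpha'$ (summable families). It is of Hardy type if: (HD1) its field of constants is $\mathbb{R}$; (HD2) for all $a,b\in\mathbb{K}^*$ with $a,b\not\asymp1$: $a\preccurlyeq b\iff a'\preccurlyeq b'$; (HD3) for all $a,b$ with $|a|\succ|b|\succ1$: $a'/a\succcurlyeq b'/b$, with $a'/a\asymp b'/b$ iff $a$ and $b$ are comparable. Notation: $\theta^{(\phi)}=\mathrm{LM}(\phi'/\phi)$ for $\phi\in\Phi$,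 $\Theta=\{\theta^{(\phi)}:\phi\in\Phi\}$, and $\hat\theta$ is the greatest lower bound of $\Theta$ in $(\Gamma,\preccurlyeq)$ when it exists. *)

(* Defs.v *)
From Stdlib Require Import ClassicalEpsilon.
From mathcomp Require Import all_boot all_order all_algebra.
From mathcomp Require Import boolp classical_sets functions cardinality fsbigop.
From mathcomp Require Import Rstruct.
Set Implicit Arguments. Unset Strict Implicit. Unset Printing Implicit Defensive.
Import Order.TTheory GRing.Theory Num.Theory.
Local Open Scope classical_set_scope.
Local Open Scope ring_scope.

Notation R := Rdefinitions.R.

Section HahnSeries.
Context {disp : Order.disp_t} {Phi : orderType disp}.

(* a monomial prod_phi phi^(g phi) is represented by its exponent map g *)
Definition mon := Phi -> R.

Definition anti_wo {X : Type} (le : X -> X -> Prop) (S : set X) : Prop :=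
  forall A : set X, A `<=` S -> A !=set0 ->
    exists2 m, A m & forall x, A x -> le x m.

Definition msupp (g : mon) : set Phi := [set phi | g phi != 0].
Definition isH (g : mon) : Prop := anti_wo (fun x y : Phi => (x <= y)%O) (msupp g).

Definition mone : mon := fun _ => 0.
Definition mmul (g h : mon) : mon := fun phi => g phi + h phi.
Definition minv (g : mon) : mon := fun phi => - g phi.
Definition phim (phi : Phi) : mon := fun psi => if psi == phi then 1 else 0.

Definition mlt (g h : mon) : Prop :=
  exists phi, g phi < h phi /\ forall psi, (phi < psi)%O -> g psi = h psi.
Definition mle (g h : mon) : Prop := g = h \/ mlt g h.

Definition is_LF (g : mon) (phi : Phi) : Prop :=
  g phi != 0 /\ forall psi, g psi != 0 -> (psi <= phi)%O.

Definition mabs (g : mon) : mon := if `[< mle g (minv g) >] then minv g else g.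

Definition is_Gamma (Gamma : set mon) : Prop :=
  [/\ Gamma `<=` isH, Gamma mone,
      (forall g h, Gamma g -> Gamma h -> Gamma (mmul g h)),
      (forall g, Gamma g -> Gamma (minv g)) &
      (forall phi, Gamma (phim phi))].

Definition ser := mon -> R.
Definition Supp (a : ser) : set mon := [set al | a al != 0].

Definition is_series (Gamma : set mon) (a : ser) : Prop :=
  Supp a `<=` Gamma /\ anti_wo mle (Supp a).

Definition szero : ser := fun _ => 0.
Definition smono (al : mon) : ser := fun be => if `[< be = al >] then 1 else 0.
Definition sone : ser := smono mone.
Definition sscale (r : R) (a : ser) : ser := fun be => r * a be.
Definition sadd (a b : ser) : ser := fun be => a be + b be.
Definition smul (a b : ser) : ser := fun al =>
  \sum_(be \in [set be | a be != 0 /\ b (mmul al (minv be)) != 0])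
     (a be * b (mmul al (minv be))).
(* the quotient b / a in K (unique when a <> 0) *)
Definition sdiv (Gamma : set mon) (b a : ser) : ser :=
  epsilon (inhabits szero) (fun q => is_series Gamma q /\ smul q a = b).

Definition LM (a : ser) : mon :=
  epsilon (inhabits mone) (fun al => a al != 0 /\ forall be, a be != 0 -> mle be al).
Definition LC (a : ser) : R := a (LM a).
Definition LT (a : ser) : ser := sscale (LC a) (smono (LM a)).

Definition sle (a b : ser) : Prop :=
  a = szero \/ (b <> szero /\ mle (LM a) (LM b)).

Definition summable {I : choiceType} (F : I -> ser) : Prop :=
  anti_wo mle (\bigcup_(i in setT) Supp (F i)) /\
  forall be, finite_set [set i | F i be != 0].
Definition ssum {I : choiceType} (F : I -> ser) : ser := fun be =>
  \sum_(i \in [set i | F i be != 0]) F i be.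

Definition series_derivation (Gamma : set mon) (d : ser -> ser) : Prop :=
  [/\ (forall a, is_series Gamma a -> is_series Gamma (d a)),
      d sone = szero,
      (forall al, Gamma al ->
         let F := fun phi : Phi =>
           sscale (al phi) (sdiv Gamma (d (smono (phim phi))) (smono (phim phi))) in
         summable F /\ d (smono al) = smul (smono al) (ssum F)) &
      (forall a, is_series Gamma a ->
         let F := fun al : mon => sscale (a al) (d (smono al)) in
         summable F /\ d a = ssum F)].

Definition hardy_type (Gamma : set mon) (d : ser -> ser) : Prop :=
  [/\ series_derivation Gamma d,
      (* HD1 *)
      (forall a, is_series Gamma a ->
         (d a = szero <-> exists r : R, a = sscale r sone)),
      (* HD2 *)
      (forall a b, is_series Gamma a -> is_series Gamma b ->
         a <> szero -> b <> szero -> LM a <> mone -> LM b <> mone ->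
         (sle a b <-> sle (d a) (d b))) &
      (* HD3 *)
      (forall a b, is_series Gamma a -> is_series Gamma b ->
         a <> szero -> b <> szero ->
         mlt (mabs (LM b)) (mabs (LM a)) -> mlt mone (mabs (LM b)) ->
         sle (sdiv Gamma (d b) b) (sdiv Gamma (d a) a) /\
         (LM (sdiv Gamma (d a) a) = LM (sdiv Gamma (d b) b) <->
          exists phi, is_LF (LM a) phi /\ is_LF (LM b) phi))].

Definition theta (Gamma : set mon) (d : ser -> ser) (phi : Phi) : mon :=
  LM (sdiv Gamma (d (smono (phim phi))) (smono (phim phi))).
Definition Theta (Gamma : set mon) (d : ser -> ser) : set mon :=
  range (theta Gamma d).
Definition Psi (Gamma : set mon) (d : ser -> ser) : set mon :=
  [set LM (sdiv Gamma (d b) b) | b in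
     [set b | is_series Gamma b /\ b <> szero /\ LM b <> mone]].
Definition is_glb (Gamma : set mon) (S : set mon) (g : mon) : Prop :=
  [/\ Gamma g, (forall s, S s -> mle g s) &
      (forall h, Gamma h -> (forall s, S s -> mle h s) -> mle h g)].

End HahnSeries.

(* Main.v *)
Require Import Defs.
From Stdlib Require Import ClassicalEpsilon.
From mathcomp Require Import all_boot all_order all_algebra.
From mathcomp Require Import boolp classical_sets functions cardinality fsbigop.
From mathcomp Require Import Rstruct.
Set Implicit Arguments. Unset Strict Implicit. Unset Printing Implicit Defensive.
Import Order.TTheory GRing.Theory Num.Theory.
Local Open Scope classical_set_scope.
Local Open Scope ring_scope.



Lemma absurdN (P Q : Prop) : ~ P -> (~ Q -> P) -> Q.
Proof. by move=> nP h; apply: contra_notP nP => /h. Qed.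

Section Mon.
Context {disp : Order.disp_t} {Phi : orderType disp}.
Implicit Types g h k : @mon _ Phi.

Lemma mlt_irr g : ~ mlt g g.
Proof. by case=> phi [+ _]; rewrite ltxx. Qed.

Lemma mlt_asym g h : mlt g h -> mlt h g -> False.
Proof.
case=> p1 [lt1 e1] [p2 [lt2 e2]].
case: (ltgtP p1 p2) => [p12|p21|p12].
- by move: lt2; rewrite e1 // ltxx.
- by move: lt1; rewrite e2 // ltxx.
- by subst; move: (lt_trans lt1 lt2); rewrite ltxx.
Qed.

Lemma mlt_trans g h k : mlt g h -> mlt h k -> mlt g k.
Proof.
case=> p1 [lt1 e1] [p2 [lt2 e2]].
case: (ltgtP p1 p2) => [p12|p21|p12].
- exists p2; split; first by rewrite e1.
  by move=> psi lt; rewrite e1 ?e2 //; apply: lt_trans lt.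
- exists p1; split; first by rewrite -e2.
  by move=> psi lt; rewrite e1 ?e2 //; apply: lt_trans lt.
- subst; exists p2; split; first exact: lt_trans lt2.
  by move=> psi lt; rewrite e1 ?e2.
Qed.

Lemma mle_refl g : mle g g. Proof. by left. Qed.

Lemma mle_trans g h k : mle g h -> mle h k -> mle g k.
Proof.
case=> [->//|gh] [<-|hk]; [by right|by right; apply: mlt_trans gh hk].
Qed.

Lemma mle_lt_trans g h k : mle g h -> mlt h k -> mlt g k.
Proof. by case=> [->//|gh] hk; apply: mlt_trans gh hk. Qed.

Lemma mlt_le_trans g h k : mlt g h -> mle h k -> mlt g k.
Proof. by move=> gh [<-//|hk]; apply: mlt_trans gh hk. Qed.

Lemma mle_antisym g h : mle g h -> mle h g -> g = h.
Proof.
case=> [//|gh] [//|hg]; exfalso; exact: mlt_asym gh hg.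
Qed.

Lemma mle_lt_false g h : mle g h -> mlt h g -> False.
Proof. case=> [->|gh] hg; [exact: mlt_irr hg | exact: mlt_asym gh hg]. Qed.

Lemma mle_neq_lt g h : mle g h -> g <> h -> mlt g h.
Proof. by case. Qed.

Lemma mlt_neq g h : mlt g h -> g <> h.
Proof. by move=> gh eq; subst; exact: mlt_irr gh. Qed.

Lemma mlt_mulr g h k : mlt g h -> mlt (mmul g k) (mmul h k).
Proof.
case=> p [lt e]; exists p; split; first by rewrite /mmul ltrD2r.
by move=> psi lt'; rewrite /mmul e.
Qed.

Lemma mlt_mull g h k : mlt g h -> mlt (mmul k g) (mmul k h).
Proof.
case=> p [lt e]; exists p; split; first by rewrite /mmul ltrD2l.
by move=> psi lt'; rewrite /mmul e.
Qed.

Lemma mle_mulr g h k : mle g h -> mle (mmul g k) (mmul h k).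
Proof. by case=> [->|/mlt_mulr]; [left|right]. Qed.

Lemma mle_mull g h k : mle g h -> mle (mmul k g) (mmul k h).
Proof. by case=> [->|/mlt_mull]; [left|right]. Qed.

Lemma mle_mul2 g h u v : mle g h -> mle u v -> mle (mmul g u) (mmul h v).
Proof. move=> /(mle_mulr u) gh /(mle_mull h) uv; exact: mle_trans gh uv. Qed.

Lemma mlt_mulr_inv g h k : mlt (mmul g k) (mmul h k) -> mlt g h.
Proof.
case=> p [lt e]; exists p; split; first by move: lt; rewrite /mmul ltrD2r.
by move=> psi lt'; move: (e psi lt'); rewrite /mmul => /addIr.
Qed.

Lemma mlt_opp g h : mlt g h -> mlt (minv h) (minv g).
Proof.
case=> p [lt e]; exists p; split; first by rewrite /minv ltrN2.
by move=> psi lt'; rewrite /minv e.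
Qed.

Lemma mlt_divl g y z : mlt (mmul g (minv y)) (mmul g (minv z)) -> mlt z y.
Proof.
case=> p [lt e]; exists p; split; first by move: lt; rewrite /mmul /minv ltrD2l ltrN2.
by move=> psi lt'; move: (e psi lt'); rewrite /mmul /minv => /addrI /oppr_inj.
Qed.

Lemma mle_divl g y z : mle (mmul g (minv y)) (mmul g (minv z)) -> mle z y.
Proof.
case=> [e|/mlt_divl]; last by right.
left; apply: funext => p; have := congr1 (fun f => f p) e.
by rewrite /mmul /minv => /addrI /oppr_inj.
Qed.

Lemma mmulC g h : mmul g h = mmul h g.
Proof. by apply: funext => p; rewrite /mmul addrC. Qed.
Lemma mmulA g h k : mmul g (mmul h k) = mmul (mmul g h) k.
Proof. by apply: funext => p; rewrite /mmul addrA. Qed.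
Lemma mmul1 g : mmul g mone = g.
Proof. by apply: funext => p; rewrite /mmul /mone addr0. Qed.
Lemma mmulK g h : mmul (mmul g h) (minv h) = g.
Proof. by apply: funext => p; rewrite /mmul /minv addrK. Qed.
Lemma mmulKV g h : mmul h (mmul g (minv h)) = g.
Proof. by apply: funext => p; rewrite /mmul /minv addrC addrNK. Qed.
Lemma mmulVK g h : mmul (mmul g (minv h)) h = g.
Proof. by apply: funext => p; rewrite /mmul /minv addrNK. Qed.
Lemma mmulKl g h : mmul (mmul h g) (minv h) = g.
Proof. by apply: funext => p; rewrite /mmul /minv addrAC subrr add0r. Qed.

Lemma mdivK g h : mmul g (minv (mmul g (minv h))) = h.
Proof. by apply: funext => p; rewrite /mmul /minv opprB addrC subrK. Qed.

Lemma mlt_one_abs g : mlt mone g -> ~ mle g (minv g).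
Proof.
move=> g1 gi; have e1 : @minv _ Phi mone = mone.
  by apply: funext=> p; rewrite /minv /mone oppr0.
have i1 : mlt (minv g) mone by rewrite -e1; apply: mlt_opp.
exact: mle_lt_false gi (mlt_trans i1 g1).
Qed.

Lemma mabs_pos g : mlt mone g -> mabs g = g.
Proof. by move=> /mlt_one_abs ng; rewrite /mabs asboolF. Qed.

Lemma phim_gt1 (p : Phi) : mlt mone (phim p).
Proof.
exists p; split; first by rewrite /mone /phim eqxx ltr01.
by move=> psi lt; rewrite /phim /mone ifN // gt_eqF.
Qed.

Lemma phim_lt (p q : Phi) : (p < q)%O -> mlt (phim p) (phim q).
Proof.
move=> pq; exists q; split; first by rewrite /phim eqxx gt_eqF // ltr01.
by move=> psi lt; rewrite /phim !ifN // gt_eqF // (lt_trans pq).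
Qed.

Lemma phim_neq1 (p : Phi) : phim p <> mone.
Proof. by move=> e; have := congr1 (fun f => f p) e; rewrite /phim /mone eqxx => /eqP; rewrite oner_eq0. Qed.

End Mon.



Lemma fsum_nz (I : choiceType) (P : set I) (F : I -> R) :
  \sum_(i \in P) F i != 0 -> exists i, P i /\ F i != 0.
Proof.
move/eqP=> nz; apply: (absurdN nz) => /forallNP h.
apply: fsbig1 => i Pi; by move: (h i); case: eqP => // _ /(_ (conj Pi isT)).
Qed.

Section Ser.
Context {disp : Order.disp_t} {Phi : orderType disp}.
Implicit Types g h k : @mon _ Phi.
Implicit Types a b q : @ser _ Phi.
Implicit Types al be ga m t : @mon _ Phi.

Definition isLM a (m : mon) := a m != 0 /\ forall be, a be != 0 -> mle be m.

Lemma isLM_uniq a m1 m2 : isLM a m1 -> isLM a m2 -> m1 = m2.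
Proof. by case=> n1 h1 [n2 h2]; apply: mle_antisym; [apply: h2|apply: h1]. Qed.

Lemma LM_eq a m : isLM a m -> LM a = m.
Proof.
move=> h; have : isLM a (LM a) by rewrite /LM; apply: epsilon_spec; exists m.
by move=> h'; apply: isLM_uniq h' h.
Qed.

Lemma neq_szero a : a <> szero -> exists be, a be != 0.
Proof.
move=> nz; apply: contra_notP nz => /forallNP h; apply: funext => be.
by move: (h be); case: eqP.
Qed.

Lemma anti_wo_sub {X : Type} (le : X -> X -> Prop) (S T : set X) :
  S `<=` T -> anti_wo le T -> anti_wo le S.
Proof. by move=> ST aT A AS; apply: aT; apply: subset_trans AS ST. Qed.

Lemma isLM_ex a : anti_wo mle (Supp a) -> a <> szero -> exists m, isLM a m.
Proof.
move=> aw /neq_szero [be abe].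
have [m Sm mx] := aw (Supp a) (fun x (h : _ x) => h) (ex_intro _ be abe).
by exists m; split.
Qed.

Lemma LM_spec a : anti_wo mle (Supp a) -> a <> szero -> isLM a (LM a).
Proof. by move=> aw /(isLM_ex aw) [m hm]; rewrite (LM_eq hm). Qed.

Lemma smonoE al be : smono al be = if `[< be = al >] then 1 else 0.
Proof. by []. Qed.

Lemma smono_id al : smono al al = 1.
Proof. by rewrite /smono asboolT. Qed.

Lemma smono_neq al be : be <> al -> smono al be = 0.
Proof. by move=> ne; rewrite /smono asboolF. Qed.

Lemma smono_nz al be : smono al be != 0 -> be = al.
Proof. by rewrite /smono; case: asboolP => // _; rewrite eqxx. Qed.

Lemma isLM_smono al : isLM (smono al) al.
Proof.
split; first by rewrite smono_id oner_eq0.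
by move=> be /smono_nz ->; left.
Qed.

Lemma smono_neq0 al : smono al <> szero.
Proof. by move=> e; have := congr1 (fun f => f al) e; rewrite smono_id /szero => /eqP; rewrite oner_eq0. Qed.

Lemma LM_smono al : LM (smono al) = al.
Proof. exact/LM_eq/isLM_smono. Qed.

Lemma smul_monoL al b : smul (smono al) b = fun ga => b (mmul ga (minv al)).
Proof.
apply: funext => ga; rewrite /smul.
have [z|nz] := eqVneq (b (mmul ga (minv al))) 0.
  rewrite fsbig1 // => be [/smono_nz -> ]; by rewrite z eqxx.
rewrite (_ : [set be | _] = [set al]) ?fsbig_set1 ?smono_id ?mul1r //.
apply/seteqP; split => be /=; first by case=> /smono_nz.
by move=> ->; rewrite smono_id oner_eq0.
Qed.

Lemma smul_monoR q t : smul q (smono t) = fun ga => q (mmul ga (minv t)).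
Proof.
apply: funext => ga; rewrite /smul.
have key be : smono t (mmul ga (minv be)) != 0 -> be = mmul ga (minv t).
  move=> /smono_nz e; by rewrite -e mdivK.
have [z|nz] := eqVneq (q (mmul ga (minv t))) 0.
  by rewrite fsbig1 // => be [+ /key e]; rewrite e z eqxx.
rewrite (_ : [set be | _] = [set mmul ga (minv t)]) ?fsbig_set1 ?mdivK ?smono_id ?mulr1 //.
apply/seteqP; split => be /=; first by case=> _ /key.
by move=> ->; rewrite mdivK smono_id oner_eq0.
Qed.

Lemma smul0l a : smul szero a = szero.
Proof. by apply: funext => ga; rewrite /smul fsbig1 // => be [/=]; rewrite /szero eqxx. Qed.

Lemma smul_nz q a ga : smul q a ga != 0 ->
  exists be, q be != 0 /\ a (mmul ga (minv be)) != 0.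
Proof.
rewrite /smul => /fsum_nz [be [[h1 h2] _]]; by exists be.
Qed.

Lemma isLM_smul q a mq ma : isLM q mq -> isLM a ma ->
  isLM (smul q a) (mmul mq ma) /\ smul q a (mmul mq ma) = q mq * a ma.
Proof.
move=> [nq hq] [na ha].
have E : [set be | q be != 0 /\ a (mmul (mmul mq ma) (minv be)) != 0] = [set mq].
  apply/seteqP; split => be /=; last by move=> ->; rewrite mmulKl.
  case=> /hq qb /ha ab; apply: (absurdN (P := mlt ma ma)); first exact: mlt_irr. move=> ne.
  have lt : mlt be mq by apply: mle_neq_lt.
  suff : mlt ma (mmul (mmul mq ma) (minv be)) by move/(mle_lt_false ab).
  have := mlt_mull (mmul mq ma) (mlt_opp lt); by rewrite mmulKl.
have V : smul q a (mmul mq ma) = q mq * a ma.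
  by rewrite /smul E fsbig_set1 mmulKl.
split => //; split; first by rewrite V mulf_neq0.
move=> ga /smul_nz [be [/hq qb /ha ab]].
by have := mle_mul2 qb ab; rewrite mmulKV.
Qed.

Lemma isLM_shift b m al : isLM b m ->
  isLM (fun ga => b (mmul ga (minv al))) (mmul al m).
Proof.
move=> [nb hb]; split; first by rewrite mmulKl.
move=> ga /hb h; have := mle_mull al h; by rewrite mmulKV.
Qed.

Lemma isLM_ssum (I : choiceType) (F : I -> ser) i0 m :
  isLM (F i0) m -> (forall i, i <> i0 -> forall be, F i be != 0 -> mlt be m) ->
  isLM (ssum F) m /\ ssum F m = F i0 m.
Proof.
move=> [n0 h0] hi.
have V : ssum F m = F i0 m.
  rewrite /ssum (_ : [set i | F i m != 0] = [set i0]) ?fsbig_set1 //.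
  apply/seteqP; split => i /=; last by move=> ->.
  move=> nz; apply: (absurdN (P := mlt m m)); first exact: mlt_irr.
  move=> ne; exact: hi ne m nz.
split => //; split; first by rewrite V.
move=> be; rewrite /ssum => /fsum_nz [i [/= nz _]].
have [e|ne] := pselect (i = i0); first by subst; exact: h0.
by right; apply: hi ne be nz.
Qed.

End Ser.

Section Gam.
Context {disp : Order.disp_t} {Phi : orderType disp}.
Implicit Types g h k : @mon _ Phi.
Implicit Types a b q : @ser _ Phi.
Implicit Types al be ga m t : @mon _ Phi.
Variable Gamma : set (@mon _ Phi).
Hypothesis HG : is_Gamma Gamma.

Lemma G_H g : Gamma g -> isH g. Proof. by case: HG => H _ _ _ _; apply: H. Qed.
Lemma G_mul g h : Gamma g -> Gamma h -> Gamma (mmul g h). Proof. by case: HG => _ _ M _ _; apply: M. Qed.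
Lemma G_inv g : Gamma g -> Gamma (minv g). Proof. by case: HG => _ _ _ I _; apply: I. Qed.
Lemma G_phi p : Gamma (phim p). Proof. by case: HG => _ _ _ _ P; apply: P. Qed.

Lemma mtotal g h : Gamma g -> Gamma h -> g = h \/ mlt g h \/ mlt h g.
Proof.
move=> Gg Gh; have HH := G_H (G_mul Gh (G_inv Gg)).
have [->|ne] := pselect (g = h); first by left.
right; have [p0 np0] : exists p, g p != h p.
  apply: contra_notP ne => /forallNP hh; apply: funext => p.
  by move: (hh p); case: eqP.
have sp0 : msupp (mmul h (minv g)) p0.
  by rewrite /msupp /mmul /minv /= subr_eq0 eq_sym.
have [m Sm mx] : exists2 m, msupp (mmul h (minv g)) m &
   forall x, msupp (mmul h (minv g)) x -> (x <= m)%O.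
  exact: (HH _ (fun x (hx : _ x) => hx) (ex_intro _ p0 sp0)).
move: Sm; rewrite /msupp /mmul /minv /= subr_eq0 => nm.
have above psi : (m < psi)%O -> g psi = h psi.
  move=> lt; apply/eqP; apply: (absurdN (P := (psi <= m)%O)).
    by rewrite leNgt lt.
  move=> ne'; apply: mx; rewrite /msupp /mmul /minv /= subr_eq0 eq_sym.
  by apply/negP.
case: (ltgtP (g m) (h m)) => [lt|gt|eq]; last by move: nm; rewrite eq eqxx.
- by left; exists m; split => // psi /above.
- by right; exists m; split => // psi /above ->.
Qed.
End Gam.



Section Fin.
Context {disp : Order.disp_t} {Phi : orderType disp}.
Implicit Types g h k : @mon _ Phi.
Implicit Types a b q : @ser _ Phi.
Implicit Types al be ga m t : @mon _ Phi.

Lemma finite_bi (X : set (@mon _ Phi)) : anti_wo mle X ->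
  (forall Y, Y `<=` X -> Y !=set0 -> exists2 m, Y m & forall y, Y y -> mle m y) ->
  finite_set X.
Proof.
move=> aw mn.
pose Z := [set x | X x /\ finite_set [set y | X y /\ mle x y]].
suff XZ : X `<=` Z.
  case: (pselect (X !=set0)) => [Xne|Xe].
    have [x0 Xx0 mx0] := mn X (fun x (h : X x) => h) Xne.
    apply: sub_finite_set (proj2 (XZ _ Xx0)) => y Xy; split => //; exact: mx0.
  apply: sub_finite_set (finite_set0 _) => x Xx; apply: Xe; by exists x.
move=> x Xx; apply: (absurdN (P := [set y | X y /\ ~ Z y] !=set0)); last first.
  by move=> nZ; exists x.
case=> y Dy.
have [x0 [Xx0 nZx0] mx0] := aw [set y | X y /\ ~ Z y] (fun y (h : _ /\ _) => proj1 h)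
  (ex_intro _ y Dy).
apply: nZx0; split => //.
case: (pselect ([set y | X y /\ mlt x0 y] !=set0)) => [Une|Ue].
  have [y0 [Xy0 lt0] my0] := mn _ (fun y (h : _ /\ _) => proj1 h) Une.
  have Zy0 : Z y0.
    case: (pselect (Z y0)) => // nZ.
    exfalso; apply: mle_lt_false lt0; apply: mx0; by split.
  apply: (@sub_finite_set _ _ ([set x0] `|` [set y | X y /\ mle y0 y])); last first.
    by rewrite finite_setU; split; [exact: finite_set1| exact: (proj2 Zy0)].
  move=> z [Xz [<-|ltz]]; first by left.
  by right; split => //; apply: my0.
apply: sub_finite_set (finite_set1 x0) => z [Xz [<-//|ltz]].
exfalso; apply: Ue; by exists z.
Qed.

Lemma finite_max_seq (s : seq (@mon _ Phi)) (Gamma : set mon) :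
  is_Gamma Gamma -> (forall x, x \in s -> Gamma x) -> s != [::] ->
  exists2 m, m \in s & forall x, x \in s -> mle x m.
Proof.
move=> HG; elim: s => [//|x s IH] Gs _.
have Gx : Gamma x by apply: Gs; rewrite inE eqxx.
case: (eqVneq s [::]) => [->|sne].
  exists x; first by rewrite inE eqxx.
  by move=> y; rewrite inE => /eqP ->; left.
have Gs' : forall y, y \in s -> Gamma y by move=> y ys; apply: Gs; rewrite inE ys orbT.
have [m ms mm] := IH Gs' sne.
have Gm : Gamma m by apply: Gs; rewrite inE ms orbT.
case: (mtotal HG Gx Gm) => [e|[xm|mx]].
- exists m; first by rewrite inE ms orbT.
  by move=> y; rewrite inE => /orP[/eqP ->|/mm //]; rewrite e; left.
- exists m; first by rewrite inE ms orbT.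
  by move=> y; rewrite inE => /orP[/eqP ->|/mm //]; right.
- exists x; first by rewrite inE eqxx.
  move=> y; rewrite inE => /orP[/eqP ->|/mm ym]; first by left.
  by right; apply: mle_lt_trans ym mx.
Qed.

Lemma finite_max (X : set (@mon _ Phi)) (Gamma : set mon) :
  is_Gamma Gamma -> finite_set X -> X `<=` Gamma -> X !=set0 ->
  exists2 m, X m & forall x, X x -> mle x m.
Proof.
move=> HG /finite_seqP [s ->] XG [x0 Xx0].
have sne : s != [::] by move: Xx0; clear XG; case: s => //=; rewrite /mkset in_nil.
have [m ms mm] := @finite_max_seq s Gamma HG (fun x xs => XG x xs) sne.
by exists m.
Qed.

Lemma anti_woU (S1 S2 : set (@mon _ Phi)) (Gamma : set mon) :
  is_Gamma Gamma -> S1 `<=` Gamma -> S2 `<=` Gamma ->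
  anti_wo mle S1 -> anti_wo mle S2 -> anti_wo mle (S1 `|` S2).
Proof.
move=> HG G1 G2 a1 a2 A AS Ane.
case: (pselect ((A `&` S1) !=set0)) => [n1|e1]; last first.
  apply: a2 => // x Ax; case: (AS x Ax) => // S1x; exfalso; apply: e1; by exists x.
case: (pselect ((A `&` S2) !=set0)) => [n2|e2]; last first.
  have [m [Am _] mm] := a1 (A `&` S1) (fun x (h : _ /\ _) => proj2 h) n1.
  exists m => // x Ax; apply: mm; split => //.
  by case: (AS x Ax) => // S2x; exfalso; apply: e2; exists x.
have [m1 [Am1 S1m1] mm1] := a1 (A `&` S1) (fun x (h : _ /\ _) => proj2 h) n1.
have [m2 [Am2 S2m2] mm2] := a2 (A `&` S2) (fun x (h : _ /\ _) => proj2 h) n2.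
have k x : A x -> mle x m1 \/ mle x m2.
  by move=> Ax; case: (AS x Ax) => Sx; [left; apply: mm1|right; apply: mm2].
case: (mtotal HG (G1 _ S1m1) (G2 _ S2m2)) => [e|[lt|lt]].
- exists m1 => // x /k [//|]; by rewrite e.
- exists m2 => // x /k [h|//]; exact: mle_trans h (or_intror lt).
- exists m1 => // x /k [//|h]; exact: mle_trans h (or_intror lt).
Qed.

Lemma smul_fin q a ga : anti_wo mle (Supp q) -> anti_wo mle (Supp a) ->
  finite_set [set be | q be != 0 /\ a (mmul ga (minv be)) != 0].
Proof.
move=> aq aa; apply: finite_bi.
  apply: anti_wo_sub aq => be [] //.
move=> Y YX [y0 Yy0].
have YS : [set mmul ga (minv y) | y in Y] `<=` Supp a.
  by move=> _ [y Yy <-]; case: (YX y Yy).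
have Ine : [set mmul ga (minv y) | y in Y] !=set0 by exists (mmul ga (minv y0)), y0.
have [M [y1 Yy1 eM] mM] := aa _ YS Ine; subst M.
exists y1 => // y Yy; apply: (@mle_divl _ _ ga); apply: mM; by exists y.
Qed.

End Fin.



Lemma mul_zero_out (x y : R) : ~ (x != 0 /\ y != 0) -> x * y = 0.
Proof.
move=> h; case: (eqVneq x 0) => [->|n1]; first by rewrite mul0r.
case: (eqVneq y 0) => [->|n2]; first by rewrite mulr0.
by exfalso; apply: h.
Qed.

Section Prod.
Context {disp : Order.disp_t} {Phi : orderType disp}.
Implicit Types g h k : @mon _ Phi.
Implicit Types a b q : @ser _ Phi.
Implicit Types al be ga m t : @mon _ Phi.
Variable Gamma : set (@mon _ Phi).
Hypothesis HG : is_Gamma Gamma.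

Lemma smul_suppG q a : is_series Gamma q -> is_series Gamma a ->
  Supp (smul q a) `<=` Gamma.
Proof.
move=> [Gq _] [Ga _] x /smul_nz [be [qb ab]].
rewrite -(mmulKV x be). have := G_mul HG (Gq _ qb) (Ga _ ab). exact.
Qed.

Lemma smul_awo q a : is_series Gamma q -> is_series Gamma a ->
  anti_wo mle (Supp (smul q a)).
Proof.
move=> [Gq aq] [Ga aa] X XS [x0 Xx0].
pose SX := [set s | q s != 0 /\ exists t, a t != 0 /\ X (mmul s t)].
pose T s := [set t | a t != 0 /\ X (mmul s t)].
have Tmax s : SX s -> exists2 t, T s t & forall t', T s t' -> mle t' t.
  move=> [_ [t [at0 Xst]]]; apply: aa; [by move=> t' []|by exists t].
pose mf s := epsilon (inhabits (@mone _ Phi)) (fun t => T s t /\ forall t', T s t' -> mle t' t).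
have mfP s : SX s -> T s (mf s) /\ forall t', T s t' -> mle t' (mf s).
  move=> /Tmax [t Tt mt]; exact: (@epsilon_spec _ (inhabits (@mone _ Phi))
    (fun t => T s t /\ forall t', T s t' -> mle t' t) (ex_intro _ t (conj Tt mt))).
have GS s : SX s -> Gamma s by move=> [qs _]; apply: Gq.
have Gmf s : SX s -> Gamma (mf s) by move=> /mfP [[amf _] _]; apply: Ga.
pose Q := [set s | SX s /\ forall s', SX s' -> mlt s s' -> mlt (mf s') (mf s)].
have Qfin : finite_set Q.
  apply: finite_bi; first by apply: anti_wo_sub aq => s [[]].
  move=> Y YQ [yy Yyy].
  have IS : [set mf y | y in Y] `<=` Supp a.
    by move=> _ [y /YQ [/mfP [[amf _] _] _] <-].
  have Ine : [set mf y | y in Y] !=set0 by exists (mf yy), yy.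
  have [_ [y0 Yy0 <-] my0] := aa _ IS Ine.
  exists y0 => // y Yy.
  have [SXy Qy] := YQ y Yy; have [SXy0 _] := YQ y0 Yy0.
  case: (mtotal HG (GS _ SXy0) (GS _ SXy)) => [->|[lt|lt]]; [by left| by right|].
  exfalso; apply: (mle_lt_false (my0 (mf y) _) (Qy _ SXy0 lt)); by exists y.
have dom s : SX s -> exists2 s', Q s' & mle s s' /\ mle (mf s) (mf s').
  move=> SXs.
  pose D := [set s' | SX s' /\ mle s s' /\ mle (mf s) (mf s')].
  have [s1 [SX1 [l1 l2]] m1] := aq D (fun x (h : D x) => proj1 (proj1 h))
    (ex_intro _ s (conj SXs (conj (mle_refl _) (mle_refl _)))).
  exists s1 => //; split => // s'' SX'' lt.
  case: (mtotal HG (Gmf _ SX'') (Gmf _ SX1)) => [e|[lt'|lt']]; [|exact lt'|];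
    (exfalso; apply: (mle_lt_false (m1 s'' _) lt); split => //; split;
      [exact: mle_trans l1 (or_intror lt)|]).
    by rewrite e.
  exact: mle_trans l2 (or_intror lt').
have SXfrom x : X x -> exists s t, [/\ SX s, T s t & x = mmul s t].
  move=> Xx; have [be [qb ab]] := smul_nz (XS x Xx).
  exists be, (mmul x (minv be)); rewrite mmulKV; split => //.
    by split => //; exists (mmul x (minv be)); rewrite mmulKV.
  by split => //; rewrite mmulKV.
pose M := [set mmul s (mf s) | s in Q].
have Mne : M !=set0.
  have [s [t [SXs _ _]]] := SXfrom _ Xx0.
  have [s' Qs' _] := dom s SXs; by exists (mmul s' (mf s')), s'.
have MG : M `<=` Gamma.
  by move=> _ [s [SXs _] <-]; exact: (G_mul HG (GS _ SXs) (Gmf _ SXs)).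
have [_ [s1 Qs1 <-] mM] := finite_max HG (finite_image (fun s => mmul s (mf s)) Qfin) MG Mne.
exists (mmul s1 (mf s1)); first by have [[_ ?] _] := mfP s1 (proj1 Qs1).
move=> x Xx; have [s [t [SXs Tst ->]]] := SXfrom _ Xx.
have [s' Qs' [l1 l2]] := dom s SXs.
apply: mle_trans (mle_mull s (proj2 (mfP s SXs) t Tst)) _.
apply: mle_trans (mle_mul2 l1 l2) _.
apply: mM; by exists s'.
Qed.

Lemma smul_series q a : is_series Gamma q -> is_series Gamma a ->
  is_series Gamma (smul q a).
Proof. by move=> sq sa; split; [apply: smul_suppG|apply: smul_awo]. Qed.

Lemma smulDl q1 q2 a ga :
  finite_set [set be | q1 be != 0 /\ a (mmul ga (minv be)) != 0] ->
  finite_set [set be | q2 be != 0 /\ a (mmul ga (minv be)) != 0] ->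
  smul (sadd q1 q2) a ga = smul q1 a ga + smul q2 a ga.
Proof.
rewrite /smul; set I1 := [set be | q1 be != 0 /\ _]; set I2 := [set be | q2 be != 0 /\ _].
move=> f1 f2.
have W (q : ser) (I : set mon) : I `<=` I1 `|` I2 -> I = [set be | q be != 0 /\ a (mmul ga (minv be)) != 0] ->
  \sum_(be \in I) q be * a (mmul ga (minv be)) = \sum_(be \in I1 `|` I2) q be * a (mmul ga (minv be)).
  move=> sub eI; apply: fsbig_widen => // x [_ nI].
  by apply: mul_zero_out; move: nI; rewrite eI.
rewrite (W _ _ _ erefl); last first.
  move=> x [/= n12 n]; case: (eqVneq (q1 x) 0) => [e1|n1]; last by left.
  by right; split => //; move: n12; rewrite /sadd e1 add0r.
rewrite (W q1 I1) // (W q2 I2) //.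
rewrite -fsbig_split; last by rewrite finite_setU.
by apply: eq_fsbigr => x _; rewrite /sadd mulrDl.
Qed.

Lemma smulZl c q a ga : smul (sscale c q) a ga = c * smul q a ga.
Proof.
case: (eqVneq c 0) => [->|nc].
  rewrite mul0r (_ : sscale 0 q = szero) ?smul0l //.
  by apply: funext => x; rewrite /sscale mul0r.
rewrite /smul mulr_fsumr.
rewrite (_ : [set be | sscale c q be != 0 /\ _] = [set be | q be != 0 /\ a (mmul ga (minv be)) != 0]).
  by apply: eq_fsbigr => x _; rewrite /sscale mulrA.
by apply/seteqP; split => x /= [h1 h2]; split => //; move: h1; rewrite /sscale mulf_eq0 negb_or; [case/andP|move=> ->; rewrite nc].
Qed.

End Prod.



Section Div.
Context {disp : Order.disp_t} {Phi : orderType disp}.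
Implicit Types g h k : @mon _ Phi.
Implicit Types q : @ser _ Phi.
Implicit Types al be ga m t : @mon _ Phi.
Variable Gamma : set (@mon _ Phi).
Hypothesis HG : is_Gamma Gamma.
Variables (a b : @ser _ Phi).
Hypotheses (sa : is_series Gamma a) (anz : a <> szero) (sb : is_series Gamma b).

Let ma := LM a.
Let LMa : isLM a ma := LM_spec (proj2 sa) anz.

Definition resid q : ser := fun ga => b ga - smul q a ga.
Definition valid q := is_series Gamma q /\
  forall ga be, resid q ga != 0 -> q be != 0 -> mlt ga (mmul be ma).
Definition trunc q1 q2 := forall ga, q1 ga <> q2 ga ->
  q1 ga = 0 /\ forall be, q1 be != 0 -> mlt ga be.

Lemma trunc_refl q : trunc q q. Proof. by []. Qed.

Lemma trunc_nz q1 q2 be : trunc q1 q2 -> q1 be != 0 -> q2 be = q1 be.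
Proof.
move=> tr nz; case: (pselect (q1 be = q2 be)) => // ne.
by have [e _] := tr be ne; move: nz; rewrite e eqxx.
Qed.

Lemma trunc_trans q1 q2 q3 : trunc q1 q2 -> trunc q2 q3 -> trunc q1 q3.
Proof.
move=> t12 t23 ga ne.
case: (pselect (q1 ga = q2 ga)) => [e|ne']; last exact: t12.
rewrite e in ne; have [z h] := t23 ga ne; rewrite e; split => // be nz.
apply: h; by rewrite (trunc_nz t12 nz).
Qed.

Lemma trunc_anti q1 q2 : trunc q1 q2 -> trunc q2 q1 -> q1 = q2.
Proof.
move=> t12 t21; apply: funext => ga; case: (pselect (q1 ga = q2 ga)) => // ne.
have [z1 _] := t12 ga ne; have [z2 _] := t21 ga (nesym ne).
by exfalso; apply: ne; rewrite z1 z2.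
Qed.

Lemma smul_local u q ga :
  (forall be, a (mmul ga (minv be)) != 0 -> u be = q be) -> smul u a ga = smul q a ga.
Proof.
move=> h; rewrite /smul.
rewrite (_ : [set be | u be != 0 /\ _] = [set be | q be != 0 /\ a (mmul ga (minv be)) != 0]).
  apply: eq_fsbigr => x; rewrite inE => -[_ ax]; by rewrite h.
by apply/seteqP; split => x /= [h1 h2]; split => //; [rewrite -h|rewrite h].
Qed.

Definition T := {q : ser | valid q}.
Definition Rel (x y : T) : bool := `[< trunc (sval x) (sval y) >].

Lemma valid0 : valid szero.
Proof.
split; last by move=> ga be _; rewrite /szero eqxx.
split; first by move=> x; rewrite /Supp /szero /= eqxx.
by move=> A AS [x Ax]; have := AS x Ax; rewrite /Supp /szero /= eqxx.
Qed.

Section Chain.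
Variable A : set T.
Hypothesis tot : total_on A (fun x y => Rel x y).

Let inA q := exists x, A x /\ sval x = q.
Let pick ga := epsilon (inhabits szero) (fun q => inA q /\ q ga != 0).
Definition ub ga := if `[< exists q, inA q /\ q ga != 0 >] then pick ga ga else 0.

Lemma coh x y ga : A x -> A y -> sval x ga != 0 -> sval y ga != 0 ->
  sval x ga = sval y ga.
Proof.
move=> Ax Ay nx ny; case: (tot Ax Ay) => /asboolP tr.
  by rewrite (trunc_nz tr nx).
by rewrite (trunc_nz tr ny).
Qed.

Lemma ubP ga : ub ga != 0 -> exists x, A x /\ sval x ga = ub ga.
Proof.
rewrite /ub; case: asboolP => [ex _|_]; last by rewrite eqxx.
have [[x [Ax e]] nz] : inA (pick ga) /\ pick ga ga != 0.
  exact: (@epsilon_spec _ (inhabits szero) (fun q => inA q /\ q ga != 0) ex).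
by exists x; rewrite e.
Qed.

Lemma ubE x ga : A x -> sval x ga != 0 -> ub ga = sval x ga.
Proof.
move=> Ax nz; rewrite /ub asboolT; last by exists (sval x); split => //; exists x.
have [[y [Ay e]] ny] : inA (pick ga) /\ pick ga ga != 0.
  apply: (@epsilon_spec _ (inhabits szero) (fun q => inA q /\ q ga != 0)).
  by exists (sval x); split => //; exists x.
by rewrite -e; apply: coh => //; rewrite e.
Qed.

Lemma ub_trunc x : A x -> trunc (sval x) ub.
Proof.
move=> Ax ga ne.
case: (eqVneq (sval x ga) 0) => [z|nz]; last by exfalso; apply: ne; rewrite (ubE Ax nz).
split => //.
have ub0 : ub ga != 0 by apply/eqP => e; apply: ne; rewrite z e.
have [y [Ay e]] := ubP ub0.
have ny : sval y ga != 0 by rewrite e.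
case: (tot Ax Ay) => /asboolP tr.
  by apply: (proj2 (tr ga _)); rewrite z e; apply/nesym/eqP.
have ne' : sval y ga <> sval x ga by rewrite z; apply/eqP.
by have [e' _] := tr ga ne'; move: ny; rewrite e' eqxx.
Qed.

Lemma ub_valid : valid ub.
Proof.
have ubG ga : ub ga != 0 -> Gamma ga.
  move=> nz; have [x [Ax e]] := ubP nz; case: (svalP x) => [[G _] _]; apply: G.
  by rewrite /Supp /= e.
split; first split.
- move=> ga nz; exact: ubG.
- move=> X XS [x0 Xx0].
  have n0 : ub x0 != 0 := XS _ Xx0.
  have [y [Ay ey]] := ubP n0.
  have tr := ub_trunc Ay.
  have ny0 : sval y x0 != 0 by rewrite ey.
  pose X' := [set z | X z /\ mle x0 z].
  have X'S : X' `<=` Supp (sval y).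
    move=> z [Xz lz]; rewrite /Supp /=.
    case: (eqVneq (sval y z) 0) => // e; exfalso.
    have ne : sval y z <> ub z by rewrite e => e'; move: (XS _ Xz); rewrite /Supp /= -e' eqxx.
    have [_ h] := tr z ne; exact: mle_lt_false lz (h _ ny0).
  case: (svalP y) => [[_ aw] _].
  have [m [Xm lm] mm] := aw X' X'S (ex_intro _ x0 (conj Xx0 (mle_refl _))).
  exists m => // z Xz.
  case: (mtotal HG (ubG _ (XS _ Xz)) (ubG _ n0)) => [->|[lt|lt]].
  + by apply: mm; split => //; left.
  + exact: mle_trans (or_intror lt) (mm _ (conj Xx0 (mle_refl _))).
  + by apply: mm; split => //; right.
- move=> ga be rnz nb.
  have [x [Ax e]] := ubP nb.
  have nxb : sval x be != 0 by rewrite e.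
  have trx := ub_trunc Ax.
  case: (pselect (mlt ga (mmul be ma))) => // nlt.
  have loc : smul ub a ga = smul (sval x) a ga.
    apply: smul_local => be' abe'.
    case: (pselect (ub be' = sval x be')) => // ne.
    have [_ h] := trx be' (nesym ne).
    exfalso; apply: nlt.
    have l1 : mle (mmul ga (minv be')) ma := (proj2 LMa) _ abe'.
    have l2 : mle ga (mmul be' ma) by have := mle_mull be' l1; rewrite mmulKV.
    exact: mle_lt_trans l2 (mlt_mulr ma (h _ nxb)).
  case: (svalP x) => [_ rx]; apply: rx nxb.
  by move: rnz; rewrite /resid loc.
Qed.

End Chain.

Lemma exists_max : exists t : T, forall s : T, Rel t s -> s = t.
Proof.
apply: Zorn.
- move=> t; apply/asboolP; exact: trunc_refl.
- move=> r s t /asboolP h1 /asboolP h2; apply/asboolP; exact: trunc_trans h1 h2.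
- move=> [x vx] [y vy] /asboolP /= h1 /asboolP /= h2.
  have e : x = y := trunc_anti h1 h2; subst y.
  by rewrite (Prop_irrelevance vx vy).
- move=> A tot; exists (exist _ (ub A) (ub_valid tot)) => s As.
  apply/asboolP => /=; exact: (ub_trunc tot As).
Qed.

Lemma anti_wo1 t : anti_wo mle [set t].
Proof. by move=> A AS [x Ax]; exists x => // y Ay; rewrite (AS _ Ay) (AS _ Ax); left. Qed.

Lemma div_exists : exists q, is_series Gamma q /\ smul q a = b.
Proof.
have [[qs vq] mx] := exists_max.
have [sq rq] := vq.
exists qs; split => //.
suff rz : resid qs = szero.
  apply: funext => ga; have := congr1 (fun f => f ga) rz.
  by rewrite /resid /szero => /eqP; rewrite subr_eq0 => /eqP ->.
case: (pselect (resid qs = szero)) => // rnz; exfalso.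
have Sr : Supp (resid qs) `<=` Supp b `|` Supp (smul qs a).
  move=> ga; rewrite /Supp /resid /=; case: (eqVneq (b ga) 0) => [->|]; last by left.
  by rewrite sub0r oppr_eq0; right.
have GSs := smul_suppG HG sq sa.
have Gr : Supp (resid qs) `<=` Gamma.
  by move=> x /Sr [h|h]; [apply: (proj1 sb) | apply: GSs].
have awr : anti_wo mle (Supp (resid qs)).
  exact: (anti_wo_sub Sr (anti_woU HG (proj1 sb) GSs (proj2 sb) (smul_awo HG sq sa))).
have [ga0 rga0] := neq_szero rnz.
have [rho rrho mrho] := awr _ (fun x (h : _ x) => h) (ex_intro _ ga0 rga0).
have ama : a ma != 0 := proj1 LMa.
pose tt := mmul rho (minv ma).
pose c := resid qs rho / a ma.
have Gtt : Gamma tt := G_mul HG (Gr _ rrho) (G_inv HG (proj1 sa _ ama)).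
have ttma : mmul tt ma = rho by rewrite /tt mmulVK.
have qtt : qs tt = 0.
  case: (eqVneq (qs tt) 0) => // nz; exfalso; have := rq _ _ rrho nz.
  rewrite ttma; exact: mlt_irr.
have below be : qs be != 0 -> mlt tt be.
  move=> nz; have h := rq _ _ rrho nz; have := mlt_mulr (minv ma) h; by rewrite mmulK.
pose q' := sadd qs (sscale c (smono tt)).
have cnz : c != 0 by rewrite /c mulf_neq0 // invr_neq0.
have sm : is_series Gamma (sscale c (smono tt)).
  have sub : Supp (sscale c (smono tt)) `<=` [set tt].
    by move=> x; rewrite /Supp /sscale /= mulf_eq0 negb_or => /andP [_ /smono_nz ->].
  split; first by move=> x /sub ->.
  exact: (anti_wo_sub sub (anti_wo1 (t:=tt))).
have key ga : smul q' a ga = smul qs a ga + c * a (mmul ga (minv tt)).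
  rewrite smulDl; [| exact: smul_fin (proj2 sq) (proj2 sa) | exact: smul_fin (proj2 sm) (proj2 sa)].
  by rewrite smulZl smul_monoL.
have Sq' : Supp q' `<=` Supp qs `|` Supp (sscale c (smono tt)).
  move=> x; rewrite /Supp /q' /sadd /=; case: (eqVneq (qs x) 0) => [->|n]; last by left.
  by rewrite add0r; right.
have sq' : is_series Gamma q'.
  split; first by move=> x /Sq' [h|h]; [apply: (proj1 sq) | apply: (proj1 sm)].
  exact: (anti_wo_sub Sq' (anti_woU HG (proj1 sq) (proj1 sm) (proj2 sq) (proj2 sm))).
have r'E ga : resid q' ga = resid qs ga - c * a (mmul ga (minv tt)).
  by rewrite /resid key opprD addrA.
have vq' : valid q'.
  split => // ga be r'nz q'nz.
  have Gga : Gamma ga.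
    move: r'nz; rewrite /resid; case: (eqVneq (b ga) 0) => [->|bn _]; last exact: (proj1 sb).
    rewrite sub0r oppr_eq0 => h; exact: (smul_suppG HG sq' sa) h.
  have lt : mlt ga rho.
    case: (mtotal HG Gga (Gr _ rrho)) => [e|[//|lt]]; exfalso; move: r'nz; rewrite r'E.
      by rewrite e /tt mdivK /c divfK // subrr eqxx.
    have -> : resid qs ga = 0.
      case: (eqVneq (resid qs ga) 0) => // h; exfalso; exact: mle_lt_false (mrho _ h) lt.
    have -> : a (mmul ga (minv tt)) = 0.
      case: (eqVneq (a (mmul ga (minv tt))) 0) => // h; exfalso.
      have := mle_mull tt ((proj2 LMa) _ h); rewrite mmulKV ttma => l.
      exact: mle_lt_false l lt.
    by rewrite mulr0 subrr eqxx.
  case: (eqVneq (qs be) 0) => [z|nz]; last exact: mlt_trans lt (rq _ _ rrho nz).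
  move: q'nz; rewrite /q' /sadd z add0r /sscale mulf_eq0 negb_or => /andP [_ /smono_nz ->].
  by rewrite ttma.
have tr : trunc qs q'.
  move=> ga ne; have : c * smono tt ga != 0.
    by apply/eqP => e; apply: ne; rewrite /q' /sadd /sscale e addr0.
  rewrite mulf_eq0 negb_or => /andP [_ /smono_nz ->]; split => //; exact: below.
have := mx (exist _ q' vq') (asboolT tr).
move/(congr1 sval) => /= e.
have := congr1 (fun f => f tt) e; rewrite /q' /sadd /sscale smono_id mulr1 qtt add0r => c0.
by move: cnz; rewrite c0 eqxx.
Qed.

Lemma sdivP : is_series Gamma (sdiv Gamma b a) /\ smul (sdiv Gamma b a) a = b.
Proof.
exact: (@epsilon_spec _ (inhabits szero) (fun q => is_series Gamma q /\ smul q a = b) div_exists).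
Qed.

End Div.



Section Main.
Context {disp : Order.disp_t} {Phi : orderType disp}.
Implicit Types g h k : @mon _ Phi.
Implicit Types q : @ser _ Phi.
Implicit Types al be ga m t : @mon _ Phi.
Variable Gamma : set (@mon _ Phi).
Hypothesis HG : is_Gamma Gamma.
Variable d : @ser _ Phi -> @ser _ Phi.
Hypothesis Hd : hardy_type Gamma d.

Lemma smono_series al : Gamma al -> is_series Gamma (smono al).
Proof.
move=> Gal; split; first by move=> x /smono_nz ->.
by move=> A AS [x Ax]; exists x => // y Ay; rewrite (smono_nz (AS _ Ay)) (smono_nz (AS _ Ax)); left.
Qed.

Let D1 : forall a, is_series Gamma a -> is_series Gamma (d a).
Proof. by case: Hd => [[]]. Qed.

Definition Q (p : Phi) := sdiv Gamma (d (smono (phim p))) (smono (phim p)).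

Lemma dphi_nz p : d (smono (phim p)) <> szero.
Proof.
case: Hd => _ HD1 _ _ e.
have [r er] := (proj1 (HD1 _ (smono_series (G_phi HG p)))) e.
have := congr1 (fun f => f (phim p)) er.
rewrite /sscale /sone smono_id smono_neq; last exact: phim_neq1.
by rewrite mulr0 => /eqP; rewrite oner_eq0.
Qed.

Lemma Q_spec p : is_series Gamma (Q p) /\ smul (Q p) (smono (phim p)) = d (smono (phim p)).
Proof.
have s := smono_series (G_phi HG p).
exact: (sdivP HG s (@smono_neq0 _ _ _) (D1 s)).
Qed.

Lemma Q_nz p : Q p <> szero.
Proof.
move=> e; have [_ h] := Q_spec p; apply: (dphi_nz (p := p)); by rewrite -h e smul0l.
Qed.

Lemma Q_LM p : isLM (Q p) (theta Gamma d p).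
Proof. exact: (LM_spec (proj2 (proj1 (Q_spec p))) (@Q_nz p)). Qed.

Lemma LF_phim (p c : Phi) : is_LF (phim p) c -> c = p.
Proof. case; rewrite /phim; case: (eqVneq c p) => // _; by rewrite eqxx. Qed.

Lemma Q_strict p f : (p < f)%O -> forall be, Q p be != 0 -> mlt be (theta Gamma d f).
Proof.
move=> lt be nz.
case: Hd => _ _ _ HD3.
have H3 := HD3 _ _ (smono_series (G_phi HG f)) (smono_series (G_phi HG p))
  (@smono_neq0 _ _ _) (@smono_neq0 _ _ _).
have hyp1 : mlt (mabs (LM (smono (phim p)))) (mabs (LM (smono (phim f)))).
  by rewrite !LM_smono (mabs_pos (phim_gt1 p)) (mabs_pos (phim_gt1 f)); apply: phim_lt.
have hyp2 : mlt mone (mabs (LM (smono (phim p)))).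
  by rewrite LM_smono (mabs_pos (phim_gt1 p)); apply: phim_gt1.
have [sle3 iff3] := H3 hyp1 hyp2.
have [e|[_ le]] := sle3; first by exfalso; apply: (@Q_nz p).
apply: mle_lt_trans ((proj2 (Q_LM p)) _ nz) _.
have ne : LM (Q p) <> LM (Q f).
  move=> e; have [c [h1 h2]] := (proj1 iff3) (esym e).
  move: h1 h2; rewrite !LM_smono => /LF_phim -> /LF_phim e'.
  by move: lt; rewrite e' ltxx.
exact: (mle_neq_lt le ne).
Qed.

Lemma dmono_LM al (f : Phi) : Gamma al -> is_LF al f ->
  isLM (d (smono al)) (mmul al (theta Gamma d f)) /\
  d (smono al) (mmul al (theta Gamma d f)) = al f * Q f (theta Gamma d f).
Proof.
move=> Gal [alf LFf].
case: Hd => [[_ _ D3 _] _ _ _].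
have [_ ->] := D3 al Gal; rewrite smul_monoL.
set F := fun p : Phi => sscale (al p) (sdiv Gamma (d (smono (phim p))) (smono (phim p))).
have [nQ hQ] := Q_LM f.
have [LMs vs] : isLM (ssum F) (theta Gamma d f) /\ ssum F (theta Gamma d f) = F f (theta Gamma d f).
  apply: isLM_ssum.
    split; first by rewrite /F /sscale mulf_neq0.
    move=> be; rewrite /F /sscale mulf_eq0 negb_or => /andP [_]; exact: hQ.
  move=> i ne be; rewrite /F /sscale mulf_eq0 negb_or => /andP [ai qi].
  apply: (@Q_strict i f) => //; rewrite lt_neqAle LFf // andbT; exact/eqP.
split; first exact: isLM_shift.
by rewrite mmulKl vs.
Qed.

Lemma da_LM a (f : Phi) : is_series Gamma a -> a <> szero -> LM a <> mone ->
  is_LF (LM a) f ->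
  isLM (d a) (mmul (LM a) (theta Gamma d f)) /\
  d a (mmul (LM a) (theta Gamma d f)) = LC a * (LM a f * Q f (theta Gamma d f)).
Proof.
move=> sa anz ma1 LFf.
have [nma hma] := LM_spec (proj2 sa) anz.
have Gma : Gamma (LM a) := proj1 sa _ nma.
have [LMm vm] := dmono_LM Gma LFf.
case: Hd => [[_ D2 _ D4] _ HD2 _].
have [_ ->] := D4 a sa.
set G := fun al : mon => sscale (a al) (d (smono al)).
have LMdma : LM (d (smono (LM a))) = mmul (LM a) (theta Gamma d f) := LM_eq LMm.
have [LMs vs] : isLM (ssum G) (mmul (LM a) (theta Gamma d f)) /\
   ssum G (mmul (LM a) (theta Gamma d f)) = G (LM a) (mmul (LM a) (theta Gamma d f)).
  apply: isLM_ssum.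
    split; first by rewrite /G /sscale vm; apply: mulf_neq0 => //; apply: mulf_neq0; [exact: (proj1 LFf)| exact: (proj1 (Q_LM f))].
    move=> be; rewrite /G /sscale mulf_eq0 negb_or => /andP [_]; exact: (proj2 LMm).
  move=> al ne be; rewrite /G /sscale mulf_eq0 negb_or => /andP [aal dal].
  have lt : mlt al (LM a) := mle_neq_lt (hma _ aal) ne.
  have Gal : Gamma al := proj1 sa _ aal.
  have al1 : al <> mone.
    by move=> e; move: dal; rewrite e -/sone D2 /szero eqxx.
  have dnz : d (smono al) <> szero by move=> e; move: dal; rewrite e /szero eqxx.
  have n1 : LM (smono al) <> mone by rewrite LM_smono.
  have n2 : LM (smono (LM a)) <> mone by rewrite LM_smono.
  have [i1 i2] := HD2 _ _ (smono_series Gal) (smono_series Gma) (@smono_neq0 _ _ _)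
    (@smono_neq0 _ _ _) n1 n2.
  have [i3 i4] := HD2 _ _ (smono_series Gma) (smono_series Gal) (@smono_neq0 _ _ _)
    (@smono_neq0 _ _ _) n2 n1.
  have s1 : sle (smono al) (smono (LM a)).
    by right; split; [exact: smono_neq0 | rewrite !LM_smono; right].
  have [e|[_ le]] := i1 s1; first by exfalso; apply: dnz.
  have [nd hd] := LM_spec (proj2 (D1 (smono_series Gal))) dnz.
  apply: mle_lt_trans (hd _ dal) _.
  rewrite -LMdma.
  have ne2 : LM (d (smono al)) <> LM (d (smono (LM a))).
    move=> e; have : sle (smono (LM a)) (smono al).
      by apply: i4; right; split => //; rewrite e; left.
    case=> [/smono_neq0 //|[_]]; rewrite !LM_smono => le'.
    exact: mle_lt_false le' lt.
  exact: (mle_neq_lt le ne2).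
split => //; by rewrite vs /G /sscale vm.
Qed.

Lemma part1 a (f : Phi) : is_series Gamma a -> a <> szero -> LM a <> mone ->
  is_LF (LM a) f ->
  let q := sdiv Gamma (d a) a in
  let q0 := sdiv Gamma (d (smono (phim f))) (smono (phim f)) in
  [/\ LT q = sscale (LM a f) (LT q0), LM q = theta Gamma d f & LC q = LM a f * LC q0].
Proof.
move=> sa anz ma1 LFf q q0.
have [sq eq] := sdivP HG sa anz (D1 sa).
have [LMd vd] := da_LM sa anz ma1 LFf.
have qnz : q <> szero.
  move=> e; move: (proj1 LMd); rewrite -eq -/q e smul0l /szero eqxx //.
have LMq := LM_spec (proj2 sq) qnz.
have LMa := LM_spec (proj2 sa) anz.
have [LMp vp] := isLM_smul LMq LMa.
rewrite -/q eq in LMp vp.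
have e1 := isLM_uniq LMp LMd.
have eLM : LM q = theta Gamma d f.
  by rewrite -(mmulK (LM q) (LM a)) e1 mmulKl.
have eLC : LC q = LM a f * LC q0.
  rewrite e1 vd in vp.
  have na : LC a != 0 := proj1 LMa.
  apply: (mulIf na); rewrite /LC -vp mulrC; done.
split => //.
by apply: funext => x; rewrite /LT eLC eLM /sscale mulrA.
Qed.

Lemma Theta_Psi : Theta Gamma d = Psi Gamma d.
Proof.
apply/seteqP; split => x.
  move=> [p _ <-]; exists (smono (phim p)); last by [].
  split; first exact: smono_series (G_phi HG p).
  split; first exact: smono_neq0.
  rewrite LM_smono; exact: phim_neq1.
move=> [b [sb [bnz bm1]] <-].
have [nb _] := LM_spec (proj2 sb) bnz.
have Gb : Gamma (LM b) := proj1 sb _ nb.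
have [p0 np0] : exists p, LM b p != 0.
  apply: (absurdN (P := LM b = mone)) => // /forallNP h; apply: funext => p.
  by move: (h p); case: eqP.
have [f Sf mf] : exists2 f, msupp (LM b) f & forall x, msupp (LM b) x -> (x <= f)%O.
  exact: (G_H HG Gb (fun x (h : msupp _ x) => h) (ex_intro _ p0 np0)).
have [_ e _] := part1 sb bnz bm1 (conj Sf mf).
by exists f.
Qed.

End Main.

Theorem mainTheorem3 (disp : Order.disp_t) (Phi : orderType disp)
  (Gamma : set (@mon _ Phi)) (d : @ser _ Phi -> @ser _ Phi) :
  is_Gamma Gamma -> hardy_type Gamma d ->
  (forall a : ser, is_series Gamma a -> a <> szero -> LM a <> mone ->
     forall phi : Phi, is_LF (LM a) phi ->
       let q := sdiv Gamma (d a) a in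
       let q0 := sdiv Gamma (d (smono (phim phi))) (smono (phim phi)) in
       [/\ LT q = sscale (LM a phi) (LT q0),
           LM q = theta Gamma d phi &
           LC q = LM a phi * LC q0]) /\
  (forall g : mon, is_glb Gamma (Theta Gamma d) g <-> is_glb Gamma (Psi Gamma d) g).
Proof.
move=> HG Hd; split.
  move=> a sa anz ma1 phi LF; exact: part1.
by move=> g; rewrite (Theta_Psi HG Hd).
Qed.
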